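(* Let $(\mathcal S,\gamma)$ be an IFS quasiarc with similarity dimension $s$, and let $\phi:[0,1]\to\gamma$ be its Hutchinson parameterization. Then for all $u,v\in[0,1]$ with $u\le v$, $$\mathcal H^s(\phi([u,v]))=\mathcal H^s(\gamma)\,|u-v|,$$ where $\mathcal H^s$ is $s$-dimensional Hausdorff measure.
   Context: $\mathcal S=\{S_1,\dots,S_N\}$, $N\ge2$, contracting similarities of $\mathbb{R}^n$ with ratios $r_i\in(0,1)$, invariant set $\gamma$ (unique nonempty compact set with $\gamma=\bigcup_iS_i(\gamma)$). IFS path: there are $a,b$ with $S_1(a)=a$, $S_N(b)=b$, $S_i(b)=S_{i+1}(a)$ for $i=1,\dots,N-1$. IFS arc: moreover $S_i(\gamma)\cap S_{i+1}(\gamma)=\{S_{i+1}(a)\}$ and $S_i(\gamma)\cap S_j(\gamma)=\emptyset$ for $i,j\in\{1,\dots,N\}$, $|i-j|>1$. IFS quasiarc: moreover $\gamma$ is quasisymmetrically equivalent to $[0,1]$. Similarity dimension: $s>0$ with $\sum_ir_i^s=1$. Hutchinson parameterization: $t_0=0$, $t_i=t_{i-1}+r_i^s$, $s_i(t)=t\,t_i+(1-t)t_{i-1}$; $S_\sigma=S_{\sigma_1}\circ\cdots\circ S_{\sigma_k}$, $s_\sigma$ likewise; $\phi_0(t)=a+t(b-a)$, $\phi_k(t)=S_\sigma\circ\phi_0\circ s_\sigma^{-1}(t)$ on $s_\sigma([0,1])$, $\sigma\in\{1,\dots,N\}^k$; $\phi$ is the uniform limit of the $\phi_k$. *)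

(* Defs.v *)
(* MathComp + MathComp-Analysis, over an abstract R : realType.
   Points of R^n are row vectors 'rV[R]_n with the EUCLIDEAN distance edist. *)
From HB Require Import structures.
From mathcomp Require Import all_boot all_order all_algebra.
From mathcomp Require Import all_classical all_reals all_analysis.
Set Implicit Arguments. Unset Strict Implicit. Unset Printing Implicit Defensive.
Import Order.TTheory GRing.Theory Num.Theory.
Import numFieldNormedType.Exports.
Local Open Scope classical_set_scope.
Local Open Scope ring_scope.

Section Defs.
Context {R : realType} {n : nat}.
Local Notation V := 'rV[R]_n.

Definition edist (x y : V) : R :=
  Num.sqrt (\sum_(i < n) (x ord0 i - y ord0 i) ^+ 2).

Definition similarity (f : V -> V) (r : R) : Prop :=
  forall x y, edist (f x) (f y) = r * edist x y.

(* Diameter (Euclidean); diam of the empty set is -oo, used as 0 below via fine *)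
Definition ediam (A : set V) : \bar R :=
  ereal_sup [set z | exists x y, A x /\ A y /\ z = (edist x y)%:E].

Definition hausdorff_content (s delta : R) (A : set V) : \bar R :=
  ereal_inf [set (\sum_(0 <= k <oo) ((fine (ediam (U k))) `^ s)%:E)%E
            | U in [set U : nat -> set V |
                     A `<=` \bigcup_k U k /\ forall k, (ediam (U k) <= delta%:E)%E]].

Definition hausdorff_measure (s : R) (A : set V) : \bar R :=
  ereal_sup [set hausdorff_content s delta A | delta in [set d : R | 0 < d]].

Variables (N : nat) (S : 'I_N -> V -> V).

Definition IFS_invariant (gamma : set V) : Prop :=
  gamma !=set0 /\ compact gamma /\ gamma = \bigcup_(i in [set: 'I_N]) (S i @` gamma).

(* IFS path with endpoints a, b (index i of the paper is the ordinal i-1) *)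
Definition IFS_path (a b : V) : Prop :=
  [/\ forall i : 'I_N, val i = 0%N -> S i a = a,
      forall i : 'I_N, val i = N.-1 -> S i b = b
    & forall i j : 'I_N, val j = (val i).+1 -> S i b = S j a].

Definition IFS_arc (gamma : set V) (a b : V) : Prop :=
  [/\ IFS_path a b,
      forall i j : 'I_N, val j = (val i).+1 -> S i @` gamma `&` S j @` gamma = [set S j a]
    & forall i j : 'I_N, ((val i).+1 < val j)%N \/ ((val j).+1 < val i)%N ->
        S i @` gamma `&` S j @` gamma = set0].

Definition homeo_halfline (eta : R -> R) : Prop :=
  {within `[0, +oo[, continuous eta} /\ set_bij `[0, +oo[ `[0, +oo[ eta.

Definition quasisymmetric01 (f : R -> V) : Prop :=
  exists eta : R -> R, homeo_halfline eta /\
    forall x y z t : R, x \in `[0, 1] -> y \in `[0, 1] -> z \in `[0, 1] -> 0 <= t ->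
      `|x - y| <= t * `|x - z| -> edist (f x) (f y) <= eta t * edist (f x) (f z).

Definition qs_equiv01 (gamma : set V) : Prop :=
  exists f : R -> V, {within `[0, 1], continuous f} /\ set_bij `[0, 1] gamma f
                     /\ quasisymmetric01 f.

Definition IFS_quasiarc (gamma : set V) (a b : V) : Prop :=
  IFS_arc gamma a b /\ qs_equiv01 gamma.

Variables (r : 'I_N -> R) (s : R).

(* t_i = r_1^s + ... + r_i^s *)
Definition tpt (i : nat) : R := \sum_(j < N | (j < i)%N) (r j) `^ s.

(* s_i(t) = t t_i + (1 - t) t_{i-1} *)
Definition sfun (i : 'I_N) (t : R) : R := t * tpt (val i).+1 + (1 - t) * tpt (val i).

Definition sword (sigma : seq 'I_N) : R -> R :=
  foldr (fun i g => sfun i \o g) id sigma.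
Definition Sword (sigma : seq 'I_N) : V -> V :=
  foldr (fun i g => S i \o g) id sigma.

Definition phi0 (a b : V) (t : R) : V := a + t *: (b - a).

(* f is phi_k : phi_k = S_sigma o phi_0 o s_sigma^{-1} on s_sigma([0,1]), |sigma| = k *)
Definition hutchinson_approx (a b : V) (k : nat) (f : R -> V) : Prop :=
  forall sigma : seq 'I_N, size sigma = k ->
    forall x, x \in `[0, 1] -> f (sword sigma x) = Sword sigma (phi0 a b x).

Definition hutchinson_param (a b : V) (phi : R -> V) : Prop :=
  exists phik : nat -> R -> V,
    (forall k, hutchinson_approx a b k (phik k)) /\
    (forall e : R, 0 < e -> exists K : nat, forall k, (K <= k)%N ->
       forall t, t \in `[0, 1] -> edist (phik k t) (phi t) < e).

End Defs.

(* Main.v *)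
Require Import Defs.
From HB Require Import structures.
From mathcomp Require Import all_boot all_order all_algebra.
From mathcomp Require Import all_classical all_reals all_analysis.
Set Implicit Arguments. Unset Strict Implicit. Unset Printing Implicit Defensive.
Import Order.TTheory GRing.Theory Num.Theory.
Import numFieldNormedType.Exports.
Local Open Scope classical_set_scope.
Local Open Scope ring_scope.
From mathcomp Require Import ring lra.

Section Ed.
Context {R : realType} {n : nat}.
Local Notation V := 'rV[R]_n.
Local Notation edist := Defs.edist.
Implicit Types x y : V.

Lemma ed_ge0 x y : 0 <= edist x y.
Proof. exact: sqrtr_ge0. Qed.

Lemma ed_coord x y i : `|x ord0 i - y ord0 i| <= edist x y.
Proof.
rewrite /edist -sqrtr_sqr ler_sqrt; last by apply: sumr_ge0 => j _; rewrite sqr_ge0.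
by rewrite (bigD1 i) //= lerDl sumr_ge0 // => j _; rewrite sqr_ge0.
Qed.

Lemma ed_le_coord x y c : 0 <= c -> (forall i, `|x ord0 i - y ord0 i| <= c) ->
  edist x y <= Num.sqrt (n%:R * c ^+ 2).
Proof.
move=> c0 H; rewrite /edist ler_sqrt; last by rewrite mulr_ge0 // sqr_ge0.
apply: (@le_trans _ _ (\sum_(i < n) c ^+ 2)).
  apply: ler_sum => i _.
  by rewrite -real_normK ?num_real // lerXn2r // ?nnegrE ?normr_ge0 // H.
by rewrite sumr_const card_ord mulr_natl.
Qed.

Lemma ed_sym x y : edist x y = edist y x.
Proof. by rewrite /edist; congr Num.sqrt; apply: eq_bigr => i _; rewrite -sqrrN opprB. Qed.

Lemma ed_xx x : edist x x = 0.
Proof. by rewrite /edist big1 ?sqrtr0 // => i _; rewrite subrr expr0n. Qed.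

Lemma eq_coord_small x y :
  (forall e : R, 0 < e -> forall i, `|x ord0 i - y ord0 i| < e) -> x = y.
Proof.
move=> H; apply/rowP => i; apply/eqP; rewrite -subr_eq0 -normr_eq0.
apply/eqP/le_anti; rewrite normr_ge0 andbT; apply/ler_addgt0Pr => e e0.
by rewrite add0r ltW // H.
Qed.

Lemma eq_ed3 x y :
  (forall e : R, 0 < e -> exists w, edist x w < e /\ edist w y < e) -> x = y.
Proof.
move=> H; apply: eq_coord_small => e e0 i.
have [w [h1 h2]] := H (e/2) (divr_gt0 e0 (ltr0Sn _ 1)).
have := ed_coord x w i; have := ed_coord w y i.
have -> : x ord0 i - y ord0 i = (x ord0 i - w ord0 i) + (w ord0 i - y ord0 i) by ring.
move=> a b; apply: (le_lt_trans (ler_normD _ _)).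
have -> : e = e/2 + e/2 by field.
by apply: ltrD; [exact: le_lt_trans b h1 | exact: le_lt_trans a h2].
Qed.

End Ed.

Section Haus.
Context {R : realType} {n : nat}.
Local Notation V := 'rV[R]_n.
Local Notation edist := Defs.edist.
Variable s : R.
Hypothesis s0 : 0 < s.
Local Notation cont := (@hausdorff_content R n s).
Local Notation H := (@hausdorff_measure R n s).
Definition term (U : set V) : \bar R := ((fine (ediam U)) `^ s)%:E.

Lemma eseries_le (f : nat -> \bar R) c : (forall k, 0 <= f k)%E ->
  (forall m, \sum_(0 <= k < m) f k <= c)%E -> (\sum_(0 <= k <oo) f k <= c)%E.
Proof.
move=> f0 Hm; apply: lime_le; last exact: nearW.
by apply: is_cvg_nneseries => k _ _; exact: f0.
Qed.

Lemma term_ge0 U : (0 <= term U)%E.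
Proof. by rewrite lee_fin powR_ge0. Qed.

Lemma cont_ge0 d (A : set V) : (0 <= cont d A)%E.
Proof.
apply: le_ereal_inf_tmp => _ [U _ <-]; apply: nneseries_ge0 => k _ _.
exact: term_ge0.
Qed.

Lemma cont_cover d (A : set V) (U : nat -> set V) : A `<=` \bigcup_k U k ->
  (forall k, ediam (U k) <= d%:E)%E ->
  (cont d A <= \sum_(0 <= k <oo) term (U k))%E.
Proof. by move=> AU Ud; apply: ereal_inf_lbound; exists U. Qed.

Lemma cont_mono d (A B : set V) : A `<=` B -> (cont d A <= cont d B)%E.
Proof.
move=> AB; apply: le_ereal_inf_tmp => _ [U [BU Ud] <-].
by apply: cont_cover => //; exact: subset_trans AB BU.
Qed.

Lemma cont_monod d d' (A : set V) : d <= d' -> (cont d' A <= cont d A)%E.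
Proof.
move=> dd; apply: le_ereal_inf_tmp => _ [U [AU Ud] <-].
by apply: cont_cover => // k; apply: (le_trans (Ud k)); rewrite lee_fin.
Qed.

Lemma ediam_le (A : set V) d : (forall x y, A x -> A y -> edist x y <= d) -> (ediam A <= d%:E)%E.
Proof. by move=> Hd; apply: ge_ereal_sup => _ [x [y [Ax [Ay ->]]]]; rewrite lee_fin; exact: Hd. Qed.

Lemma ediam_ub (A : set V) x y : A x -> A y -> ((edist x y)%:E <= ediam A)%E.
Proof. by move=> Ax Ay; apply: ereal_sup_ubound; exists x, y. Qed.

Lemma ediam_set0 : ediam (@set0 V) = -oo%E.
Proof.
rewrite /ediam (_ : [set z | _] = set0) ?ereal_sup0 //.
by apply/seteqP; split => z //= [x [y [[]]]].
Qed.

Lemma ediam_set1 (p : V) : ediam [set p] = 0%E.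
Proof.
rewrite /ediam (_ : [set z | _] = [set 0%:E]) ?ereal_sup1 //.
apply/seteqP; split => z /=.
- by move=> [x [y [-> [-> ->]]]]; rewrite ed_xx.
- by move=> ->; exists p, p; rewrite ed_xx.
Qed.

Lemma term_set0 : term set0 = 0%E.
Proof. by rewrite /term ediam_set0 /= powR0 // gt_eqF. Qed.

Lemma term_set1 (p : V) : term [set p] = 0%E.
Proof. by rewrite /term ediam_set1 /= powR0 // gt_eqF. Qed.

Lemma cont_set1 d (p : V) : 0 <= d -> (cont d [set p] <= 0)%E.
Proof.
move=> d0; apply: (le_trans (cont_cover (U := fun k => if k is 0%N then [set p] else set0) _ _)).
- by move=> x ->; exists 0%N.
- by move=> [|k]; rewrite ?ediam_set1 ?ediam_set0 ?lee_fin ?leNye.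
- apply: eseries_le => [k|m]; first exact: term_ge0.
  by rewrite big1 // => -[|k] _; rewrite ?term_set1 ?term_set0.
Qed.

Lemma interleave_sum (h f g : nat -> \bar R) m : (forall k, h k.*2 = f k) ->
  (forall k, h k.*2.+1 = g k) ->
  (\sum_(0 <= k < m.*2) h k = \sum_(0 <= k < m) (f k + g k))%E.
Proof.
move=> hf hg; elim: m => [|m IH]; first by rewrite !big_geq.
by rewrite doubleS !big_nat_recr //= IH hf hg addeA.
Qed.

Lemma cont_subadd d (A B : set V) : (cont d (A `|` B) <= cont d A + cont d B)%E.
Proof.
have nNy C : cont d C != -oo%E by rewrite gt_eqF // (lt_le_trans _ (cont_ge0 d C)) // ltNy0.
have finE C : cont d C \isn't a fin_num -> cont d C = +oo%E.
  by rewrite fin_numE negb_and !negbK (negbTE (nNy C)) => /eqP.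
have [Afin|/finE ->] := boolP (cont d A \is a fin_num); last by rewrite addye ?leey.
have [Bfin|/finE ->] := boolP (cont d B \is a fin_num); last by rewrite addey ?leey.
apply/lee_addgt0Pr => e e0.
have e2 : 0 < e / 2 by rewrite divr_gt0.
have [_ [U [AU Ud] <-] hU] := lb_ereal_inf_adherent e2 Afin.
have [_ [W [BW Wd] <-] hW] := lb_ereal_inf_adherent e2 Bfin.
set Z := fun k => if odd k then W k./2 else U k./2.
apply: (le_trans (cont_cover (U := Z) _ _)).
- move=> x [/AU [k _ Ux]|/BW [k _ Wx]].
  + by exists k.*2 => //; rewrite /Z odd_double half_double.
  + by exists k.*2.+1 => //; rewrite /Z /= odd_double /= uphalf_double.
- by move=> k; rewrite /Z; case: (odd k).
- apply: eseries_le => [k|m]; first exact: term_ge0.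
  apply: (@le_trans _ _ (\sum_(0 <= k < m.*2) term (Z k))%E).
    apply: (@lee_sum_nneg_natr _ _ xpredT) => [k _ _|]; first exact: term_ge0.
    by rewrite -addnn leq_addr.
  rewrite (@interleave_sum _ (fun k => term (U k)) (fun k => term (W k))); last 2 first.
  + by move=> k; rewrite /Z odd_double half_double.
  + by move=> k; rewrite /Z /= odd_double /= uphalf_double.
  rewrite big_split /=.
  apply: (le_trans (leeD (nneseries_lim_ge _ (fun k _ _ => term_ge0 (U k)))
                         (nneseries_lim_ge _ (fun k _ _ => term_ge0 (W k))))).
  apply: (le_trans (leeD (ltW hU) (ltW hW))).
  move: (fineK Afin) (fineK Bfin); rewrite /hausdorff_content.
  move: (ereal_inf _) (ereal_inf _) => a b <- <-.
  rewrite -!EFinD lee_fin.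
  lra.
Qed.

Lemma le_mul_inf (S : set (\bar R)) (x : \bar R) (r : R) : 0 < r ->
  (forall y, S y -> x <= r%:E * y)%E -> (x <= r%:E * ereal_inf S)%E.
Proof.
move=> r0 Hy; rewrite -lee_pdivrMl //; apply: le_ereal_inf_tmp => y Sy.
by rewrite lee_pdivrMl //; exact: Hy.
Qed.

Lemma cont_lip d c (A : set V) (f : V -> V) : 0 < c -> 0 <= d ->
  (forall x y, A x -> A y -> edist (f x) (f y) <= c * edist x y) ->
  (cont (c * d) (f @` A) <= (c `^ s)%:E * cont d A)%E.
Proof.
move=> c0 d0 fL; apply: le_mul_inf; first by rewrite powR_gt0.
move=> _ [U [AU Ud] <-].
set Z := fun k => f @` (U k `&` A).
have hZ k : (ediam (Z k) <= (c * d)%:E /\ term (Z k) <= (c `^ s)%:E * term (U k))%E.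
  have [[x [Ux Ax]]|nex] := pselect (exists x, U k x /\ A x); last first.
    have -> : Z k = set0.
      by apply/seteqP; split => // y [x [Ux Ax] _]; apply: nex; exists x.
    by rewrite ediam_set0 term_set0 leNye mule_ge0 ?term_ge0 // lee_fin powR_ge0.
  have D0 : (0 <= ediam (U k))%E by apply: (le_trans _ (ediam_ub Ux Ux)); rewrite lee_fin ed_ge0.
  have Dfin : ediam (U k) \is a fin_num.
    by rewrite ge0_fin_numE // (le_lt_trans (Ud k)) // ltry.
  set D := fine (ediam (U k)).
  have hD : (ediam (Z k) <= (c * D)%:E)%E.
    apply: ediam_le => _ _ [y [Uy Ay] <-] [z [Uz Az] <-].
    apply: (le_trans (fL _ _ Ay Az)); rewrite ler_pM2l // -lee_fin /D fineK //.
    exact: ediam_ub.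
  have cD : c * D <= c * d by rewrite ler_pM2l // -lee_fin /D fineK.
  split; first by apply: (le_trans hD); rewrite lee_fin.
  have Z0 : (0 <= ediam (Z k))%E.
    have fZ : Z k (f x) by exists x.
    by apply: (le_trans _ (ediam_ub fZ fZ)); rewrite lee_fin ed_ge0.
  have Zfin : ediam (Z k) \is a fin_num by rewrite ge0_fin_numE // (le_lt_trans hD) // ltry.
  have U0 : 0 <= fine (ediam (U k)) by exact: fine_ge0.
  rewrite /term -EFinM lee_fin -powRM ?(ltW c0) //.
  apply: ge0_ler_powR; rewrite ?(ltW s0) ?nnegrE ?fine_ge0 ?mulr_ge0 ?(ltW c0) //.
  exact: (fine_le Zfin _ hD).
apply: (le_trans (cont_cover (U := Z) _ _)).
- by move=> _ [x Ax <-]; have [k _ Ux] := AU x Ax; exists k => //; exists x.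
- by move=> k; exact: (hZ k).1.
- rewrite -nneseriesZl; last by move=> k _; exact: term_ge0.
  by apply: lee_nneseries => [k _ _|k _]; [exact: term_ge0| exact: (hZ k).2].
Qed.

Lemma H_ge0 (A : set V) : (0 <= H A)%E.
Proof.
apply: (le_trans (cont_ge0 1 A)); apply: ereal_sup_ubound; exists 1 => //=.
Qed.

Lemma H_mono (A B : set V) : A `<=` B -> (H A <= H B)%E.
Proof.
move=> AB; apply: ge_ereal_sup => _ [d d0 <-].
apply: (le_trans (cont_mono d AB)); apply: ereal_sup_ubound; exists d => //.
Qed.

Lemma cont_le_H d (A : set V) : 0 < d -> (cont d A <= H A)%E.
Proof. by move=> d0; apply: ereal_sup_ubound; exists d. Qed.

Lemma H_subadd (A B : set V) : (H (A `|` B) <= H A + H B)%E.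
Proof.
apply: ge_ereal_sup => _ [d d0 <-].
apply: (le_trans (cont_subadd d A B)); apply: leeD; exact: cont_le_H.
Qed.

Lemma H_lip c (A : set V) (f : V -> V) : 0 < c ->
  (forall x y, A x -> A y -> edist (f x) (f y) <= c * edist x y) ->
  (H (f @` A) <= (c `^ s)%:E * H A)%E.
Proof.
move=> c0 fL; apply: ge_ereal_sup => _ [d d0 <-].
have -> : d = c * (d / c) by rewrite mulrC divfK // gt_eqF.
apply: (le_trans (cont_lip c0 _ fL)); first by rewrite ltW // divr_gt0.
apply: lee_wpmul2l; first by rewrite lee_fin powR_ge0.
by apply: cont_le_H; rewrite divr_gt0.
Qed.

Lemma H_set1 (p : V) : H [set p] = 0%E.
Proof.
apply/le_anti; rewrite H_ge0 andbT.
by apply: ge_ereal_sup => _ [d d0 <-]; apply: cont_set1; rewrite ltW.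
Qed.

End Haus.

Lemma geo_small (R : realType) (q B e : R) : 0 <= q < 1 -> 0 <= B -> 0 < e ->
  exists m : nat, q ^+ m * B < e.
Proof.
move=> /andP[q0 q1] B0 e0.
have qn : `|q| < 1 by rewrite ger0_norm.
have e1 : 0 < e / (B + 1) by rewrite divr_gt0 // ltr_wpDl.
have := cvgr0_norm_lt (fun k : nat => q ^+ k) (cvg_expr qn) _ e1.
move=> [m _ Hm]; exists m; have := Hm m (leqnn m); rewrite /= ger0_norm ?exprn_ge0 // => h.
apply: (le_lt_trans (y := q ^+ m * (B + 1))).
  by rewrite ler_wpM2l ?exprn_ge0 // lerDl.
by rewrite -ltr_pdivlMr // ltr_wpDl.
Qed.

Lemma geo_le0 (R : realType) (q C x : R) : 0 <= q < 1 -> 0 <= C ->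
  (forall m : nat, x <= C * q ^+ m) -> x <= 0.
Proof.
move=> q01 C0 Hx; apply/ler_addgt0Pr => e e0; rewrite add0r.
have [m hm] := geo_small q01 C0 e0.
by apply: (le_trans (Hx m)); rewrite mulrC ltW.
Qed.

Lemma coord_le_norm (R : realType) n (v : 'rV[R]_n) i : `|v ord0 i| <= `|v|.
Proof.
have /mapP[j Hj ->] : `|v ord0 i| \in [seq `|v x.1 x.2| | x : 'I_1 * 'I_n].
  by apply/mapP; exists (ord0, i) => //=; rewrite mem_enum.
by rewrite [leRHS]/Num.Def.normr /= mx_normrE; apply/bigmax_geP; right => /=; exists j.
Qed.

Lemma compact_coord_bounded (R : realType) n (A : set 'rV[R]_n) : compact A ->
  exists M, 0 <= M /\ forall p, A p -> forall i, `|p ord0 i| <= M.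
Proof.
move=> /compact_bounded [M [Mr HM]].
exists (`|M| + 1); split; first by rewrite addr_ge0.
move=> p Ap i; have h1 := @coord_le_norm _ _ p i.
have h2 : `|p| <= `|M| + 1.
  apply: (HM (`|M| + 1)) => //.
  by rewrite (le_lt_trans (ler_norm M)) // ltrDl.
exact: le_trans h1 h2.
Qed.

Lemma compact_coord_closed (R : realType) n (A : set 'rV[R]_n) (p : 'rV[R]_n) : compact A ->
  (forall e : R, 0 < e -> exists2 g, A g & forall i, `|p ord0 i - g ord0 i| < e) -> A p.
Proof.
move=> cA Hp.
have cl : closed A by apply: compact_closed => //; exact: hausdorff_space_ball.
rewrite ((closure_id A).1 cl).
move=> B /nbhs_ballP [e e0 hB].
have [g Ag hg] := Hp e e0.
exists g; split => //; apply: hB.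
rewrite -ball_normE /= /Num.Def.normr /= mx_normrE.
apply/bigmax_ltP => /=; split => // -[i j] _ /=.
by rewrite (ord1 i) !mxE.
Qed.

Lemma mem01 (R : realType) (x : R) : 0 <= x <= 1 -> x \in `[0, 1].
Proof. by move=> h; rewrite in_itv /=. Qed.

Lemma maxf_prop (R : realType) N (f : 'I_N -> R) : (0 < N)%N -> (forall i, 0 < f i < 1) ->
  [/\ 0 <= \big[Order.max/0]_i f i, \big[Order.max/0]_i f i < 1 &
      forall i, f i <= \big[Order.max/0]_i f i].
Proof.
move=> N0 f01; split.
- apply: (le_trans _ (le_bigmax 0 f (Ordinal N0))).
  by have /andP[/ltW] := f01 (Ordinal N0).
- by apply: bigmax_lt => // i _; have /andP[] := f01 i.
- by move=> i; exact: le_bigmax.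
Qed.

Section IFS.
Context {R : realType} {n N : nat}.
Local Notation V := 'rV[R]_n.
Local Notation edist := Defs.edist.
Variables (S : 'I_N -> V -> V) (r : 'I_N -> R) (gamma : set V) (a b : V) (s : R)
  (phi : R -> V).
Hypothesis N2 : (2 <= N)%N.
Hypothesis r01 : forall i, 0 < r i < 1.
Hypothesis Ssim : forall i, similarity (S i) (r i).
Hypothesis inv : IFS_invariant S gamma.
Hypothesis s0 : 0 < s.
Hypothesis sum1 : \sum_(i < N) (r i) `^ s = 1.
Hypothesis hp : hutchinson_param S r s a b phi.

Local Notation t := (tpt r s).
Local Notation rho i := (r i `^ s).
Local Notation sf := (Defs.sfun r s).
Local Notation sw := (sword r s).
Local Notation Sw := (Sword S).

Lemma N0 : (0 < N)%N. Proof. exact: leq_trans N2. Qed.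

Lemma rho01 i : 0 < rho i < 1.
Proof.
have /andP[r0 r1] := r01 i.
rewrite powR_gt0 //=.
have := gt0_ltr_powR s0 (ltW r0 : 0 <= r i) (ler01 : (0:R) <= 1) r1.
by rewrite powR1.
Qed.

Lemma rho_gt0 i : 0 < rho i. Proof. by have /andP[] := rho01 i. Qed.

Lemma t0 : t 0 = 0.
Proof. by rewrite /tpt big_pred0 // => j. Qed.

Lemma tS (i : 'I_N) : t i.+1 = t i + rho i.
Proof.
rewrite /tpt (bigD1 i) //= addrC; congr (_ + _); apply: eq_bigl => j.
rewrite ltnS leq_eqVlt -(inj_eq val_inj) /=.
by case: (ltngtP j i) => //= _; rewrite andbT.
Qed.

Lemma tN : t N = 1.
Proof. by rewrite /tpt -sum1; apply: eq_bigl => j; rewrite ltn_ord. Qed.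

Lemma t_mono m k : (m <= k)%N -> t m <= t k.
Proof.
move=> mk; rewrite /tpt [X in _ <= X]big_mkcond [X in X <= _]big_mkcond /=.
apply: ler_sum => j _; case: ifP => jm; last by case: ifP => _; rewrite ?powR_ge0.
by rewrite (leq_trans jm mk).
Qed.

Lemma t_ge0 m : 0 <= t m.
Proof. by rewrite -t0 t_mono. Qed.

Lemma t_le1 m : t m <= 1.
Proof.
rewrite -sum1 /tpt [X in X <= _]big_mkcond /=.
by apply: ler_sum => j _; case: ifP => _; rewrite ?powR_ge0.
Qed.

Lemma sfE (i : 'I_N) x : sf i x = t i + rho i * x.
Proof. by rewrite /Defs.sfun tS; ring. Qed.

Lemma sf01 (i : 'I_N) x : 0 <= x <= 1 -> 0 <= sf i x <= 1.
Proof.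
move=> /andP[x0 x1]; rewrite sfE; have h0 := t_ge0 i; have h1 := t_le1 i.+1.
rewrite tS in h1; have h2 := rho_gt0 i.
apply/andP; split; first by rewrite addr_ge0 // mulr_ge0 // ltW.
by apply: (le_trans _ h1); rewrite lerD2l ler_piMr // ltW.
Qed.

Lemma swE sigma : exists2 L, 0 < L & forall y, sw sigma y = sw sigma 0 + L * y.
Proof.
elim: sigma => [|i sigma [L L0 IH]]; first by exists 1 => // y; rewrite /= mul1r add0r.
exists (rho i * L); first by rewrite mulr_gt0 // rho_gt0.
by move=> y; rewrite /= IH !sfE mulrDr addrA mulrA.
Qed.

Lemma sw_mono sigma x y : x <= y -> sw sigma x <= sw sigma y.
Proof. by move=> xy; have [L L0 E] := swE sigma; rewrite (E x) (E y) lerD2l ler_pM2l. Qed.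

Lemma sw01 sigma x : 0 <= x <= 1 -> 0 <= sw sigma x <= 1.
Proof. by elim: sigma => [//|i sigma IH] /IH h /=; exact: sf01. Qed.

Lemma sw_surj sigma x : sw sigma 0 <= x <= sw sigma 1 ->
  exists2 y, 0 <= y <= 1 & x = sw sigma y.
Proof.
have [L L0 E] := swE sigma; rewrite (E 1) mulr1 => /andP[h1 h2].
exists ((x - sw sigma 0) / L); last by rewrite (E ((x - sw sigma 0) / L)) mulrC divfK ?gt_eqF //; ring.
apply/andP; split; first by rewrite divr_ge0 // ?subr_ge0 // ltW.
by rewrite ler_pdivrMr // mul1r lerBlDl.
Qed.

Lemma decomp1 x : 0 <= x <= 1 -> exists i : 'I_N, t i <= x <= t i.+1.
Proof.
move=> /andP[x0 x1].
suff H m : (m < N)%N -> x <= t m.+1 -> exists i : 'I_N, t i <= x <= t i.+1.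
  by apply: (H N.-1); rewrite ?prednK ?N0 ?tN // ltn_predL N0.
elim: m => [|m IH] mN xm.
  by exists (Ordinal mN); rewrite /= t0 x0.
have [tx|xt] := leP (t m.+1) x; first by exists (Ordinal mN); rewrite tx.
by apply: IH; [exact: ltn_trans mN | exact: ltW].
Qed.

Lemma sf_inv (i : 'I_N) x : t i <= x <= t i.+1 ->
  0 <= (x - t i) / rho i <= 1 /\ sf i ((x - t i) / rho i) = x.
Proof.
move=> /andP[h1 h2]; have r0 := rho_gt0 i; split.
- apply/andP; split; first by rewrite divr_ge0 // ?subr_ge0 // ltW.
  by rewrite ler_pdivrMr // mul1r lerBlDl -tS.
- by rewrite sfE mulrC divfK ?gt_eqF //; ring.
Qed.

Lemma decompk k x : 0 <= x <= 1 ->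
  exists sigma, size sigma = k /\ exists2 y, 0 <= y <= 1 & x = sw sigma y.
Proof.
elim: k x => [|k IH] x x01; first by exists [::]; split => //; exists x.
have [i hi] := decomp1 x01.
have [h01 hx] := sf_inv hi.
have [sigma [sz [y y01 ey]]] := IH _ h01.
exists (i :: sigma); split; first by rewrite /= sz.
by exists y => //=; rewrite -ey hx.
Qed.


Let rm := \big[Order.max/0]_i r i.
Lemma rm_prop : [/\ 0 <= rm, rm < 1 & forall i, r i <= rm].
Proof. exact: maxf_prop N0 r01. Qed.

Lemma ed_S i x y : edist (S i x) (S i y) = r i * edist x y.
Proof. exact: Ssim. Qed.

Lemma Sw_ed sigma x y : edist (Sw sigma x) (Sw sigma y) <= rm ^+ size sigma * edist x y.
Proof.
have [rm0 _ rmi] := rm_prop.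
elim: sigma => [|i sigma IH] /=; first by rewrite expr0 mul1r.
rewrite ed_S exprS -mulrA; apply: ler_pM => //; first by have /andP[/ltW] := r01 i.
exact: ed_ge0.
Qed.

Lemma S_gamma i x : gamma x -> gamma (S i x).
Proof.
case: inv => _ [_ eq] gx; move/seteqP: eq => [_ sub].
by apply: sub; exists i => //; exists x.
Qed.

Lemma Sw_gamma sigma x : gamma x -> gamma (Sw sigma x).
Proof. by elim: sigma => [//|i sigma IH] gx /=; apply: S_gamma; exact: IH. Qed.

Lemma gamma_bound : exists M, 0 <= M /\ forall p, gamma p -> forall i, `|p ord0 i| <= M.
Proof. case: inv => _ [cg _]; exact: compact_coord_bounded. Qed.

Lemma phi0_bound : exists2 B, 0 <= B & forall y p, 0 <= y <= 1 -> gamma p ->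
  edist (phi0 a b y) p <= B.
Proof.
have [M [M0 HM]] := gamma_bound.
set c := edist a 0 + edist b a + M.
have c0 : 0 <= c by rewrite /c !addr_ge0 // ed_ge0.
exists (Num.sqrt (n%:R * c ^+ 2)); first exact: sqrtr_ge0.
move=> y p /andP[y0 y1] gp; apply: ed_le_coord => // j.
rewrite /phi0 !mxE.
have ha : `|a ord0 j| <= edist a 0 by have := ed_coord a 0 j; rewrite mxE subr0.
have hb := ed_coord b a j.
have hpj := HM p gp j.
have e1 : a ord0 j + y * (b ord0 j - a ord0 j) - p ord0 j =
  a ord0 j + y * (b ord0 j - a ord0 j) + (- p ord0 j) by [].
rewrite e1; apply: (le_trans (ler_normD _ _)); rewrite normrN.
rewrite /c; apply: lerD => //; apply: (le_trans (ler_normD _ _)); apply: lerD => //.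
rewrite normrM ger0_norm //; apply: (le_trans _ hb).
by rewrite ler_piMl.
Qed.

Lemma gamma_diam : exists2 D, 0 <= D & forall x y, gamma x -> gamma y -> edist x y <= D.
Proof.
have [M [M0 HM]] := gamma_bound.
exists (Num.sqrt (n%:R * (M + M) ^+ 2)); first exact: sqrtr_ge0.
move=> x y gx gy; apply: ed_le_coord => [|j]; first by rewrite addr_ge0.
apply: (le_trans (ler_normB _ _)); apply: lerD; exact: HM.
Qed.

Lemma gamma0 : exists g, gamma g.
Proof. by case: inv => -[g gg] _; exists g. Qed.

Lemma phi_self (i : 'I_N) x : 0 <= x <= 1 -> phi (sf i x) = S i (phi x).
Proof.
move=> x01; have [phik [Ha Hc]] := hp.
apply: eq_ed3 => e e0.
have [K HK] := Hc e e0.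
have [sigma [sz [y y01 xe]]] := decompk K x01.
exists (phik K.+1 (sf i x)); split.
  by rewrite ed_sym; apply: HK => //; apply: mem01; exact: sf01.
have e1 : phik K.+1 (sf i x) = S i (phik K x).
  rewrite xe.
  have -> : sf i (sw sigma y) = sw (i :: sigma) y by [].
  rewrite (Ha K.+1 (i :: sigma)) ?mem01 //=; last by rewrite sz.
  by rewrite (Ha K sigma) ?mem01.
rewrite e1 ed_S; have /andP[ri0 ri1] := r01 i.
apply: (lt_le_trans (y := r i * e)); first by rewrite ltr_pM2l // HK ?mem01.
by rewrite ler_piMl // ltW.
Qed.

Lemma phi_in_gamma x : 0 <= x <= 1 -> gamma (phi x).
Proof.
move=> x01; have [phik [Ha Hc]] := hp.
have [B B0 HB] := phi0_bound.
have [g gg] := gamma0.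
have [rm0 rm1 _] := rm_prop.
case: inv => _ [cg _].
apply: compact_coord_closed => // e e0.
have e2 : 0 < e / 2 by rewrite divr_gt0.
have [K HK] := Hc _ e2.
have [m hm] := geo_small (q := rm) (ltac:(by rewrite rm0 rm1)) B0 e2.
have [sigma [sz [y y01 xe]]] := decompk (maxn K m) x01.
exists (Sw sigma g); first exact: Sw_gamma.
move=> j.
have h1 := ed_coord (phi x) (phik (maxn K m) x) j.
have h2 := ed_coord (phik (maxn K m) x) (Sw sigma g) j.
have d1 : edist (phi x) (phik (maxn K m) x) < e / 2.
  by rewrite ed_sym HK ?mem01 // leq_maxl.
have d2 : edist (phik (maxn K m) x) (Sw sigma g) < e / 2.
  rewrite {1}xe (Ha _ sigma) ?mem01 //.
  apply: (le_lt_trans (Sw_ed _ _ _)); rewrite sz.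
  apply: (le_lt_trans _ hm); apply: ler_pM.
  - by rewrite exprn_ge0.
  - exact: ed_ge0.
  - by apply: ler_wiXn2l => //; [exact: ltW | exact: leq_maxr].
  - exact: HB.
have -> : phi x ord0 j - Sw sigma g ord0 j =
  (phi x ord0 j - phik (maxn K m) x ord0 j) + (phik (maxn K m) x ord0 j - Sw sigma g ord0 j).
  by rewrite addrA subrK.
apply: (le_lt_trans (ler_normD _ _)).
rewrite [e](splitr e); apply: ltrD; [exact: le_lt_trans h1 d1 | exact: le_lt_trans h2 d2].
Qed.

Lemma gamma_in_phi g : gamma g -> exists2 x, 0 <= x <= 1 & phi x = g.
Proof.
move=> gg; have [phik [Ha Hc]] := hp.
have [B B0 HB] := phi0_bound.
have [rm0 rm1 _] := rm_prop.
have ex : forall q : V, exists iq : 'I_N * V, gamma q -> gamma iq.2 /\ q = S iq.1 iq.2.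
  move=> q; case: (pselect (gamma q)) => gq; last by exists (Ordinal N0, q).
  case: inv => _ [_ eq]; move: gq; rewrite {1}eq => -[i _ [q' gq' <-]].
  by exists (i, q').
have [f hf] := choice ex.
pose p := fun k => iter k (fun x => (f x).2) g.
pose ii := fun k => (f (p k)).1.
have gp k : gamma (p k) by elim: k => //= k IH; exact: (hf _ IH).1.
pose sig := fun k => mkseq ii k.
have Swrcons : forall sigma i x, Sw (rcons sigma i) x = Sw sigma (S i x).
  by move=> sigma i x; elim: sigma => //= j sigma ->.
have swrcons : forall sigma i x, sw (rcons sigma i) x = sw sigma (sf i x).
  by move=> sigma i x; elim: sigma => //= j sigma ->.
have gS k : g = Sw (sig k) (p k).
  elim: k => // k IH; rewrite /sig mkseqS Swrcons -/(sig k) {1}IH; congr (Sw _ _).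
  exact: (hf _ (gp k)).2.
pose xs := fun k => sw (sig k) 0.
pose us := fun k => sw (sig k) 1.
have xs_nd : nondecreasing_seq xs.
  apply/nondecreasing_seqP => k; rewrite /xs /sig mkseqS swrcons.
  by apply: sw_mono; rewrite sfE mulr0 addr0 t_ge0.
have us_ni : nonincreasing_seq us.
  apply/nonincreasing_seqP => k; rewrite /us /sig mkseqS swrcons.
  by apply: sw_mono; rewrite sfE mulr1 -tS t_le1.
have xu k : xs k <= us k by apply: sw_mono.
have xuj j k : xs j <= us k.
  case: (leqP j k) => jk; first by apply: le_trans (xs_nd _ _ jk) (xu k).
  by apply: le_trans (xu j) (us_ni _ _ (ltnW jk)).
have ub : ubound (range xs) (us 0).
  by move=> _ [j _ <-]; exact: xuj.
have ne : range xs !=set0 by exists (xs 0), 0.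
pose tt := sup (range xs).
have ttk k : xs k <= tt <= us k.
  apply/andP; split; first by apply: (sup_upper_bound (conj ne (ex_intro _ _ ub))); exists k.
  by apply: ge_sup => // _ [j _ <-]; exact: xuj.
have tt01 : 0 <= tt <= 1 by exact: ttk 0%N.
exists tt => //.
apply: eq_ed3 => e e0.
have [K HK] := Hc e e0.
have [m hm] := geo_small (q := rm) (ltac:(by rewrite rm0 rm1)) B0 e0.
set k := maxn K m.
exists (phik k tt); split; first by rewrite ed_sym HK ?mem01 // leq_maxl.
have [y y01 ey] := sw_surj (ttk k).
have sz : size (sig k) = k by rewrite size_mkseq.
rewrite {1}ey (Ha k (sig k)) ?mem01 // [X in edist _ X](gS k).
apply: (le_lt_trans (Sw_ed _ _ _)); rewrite sz.
apply: (le_lt_trans _ hm); apply: ler_pM.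
- by rewrite exprn_ge0.
- exact: ed_ge0.
- by apply: ler_wiXn2l => //; [exact: ltW | exact: leq_maxr].
- exact: HB.
Qed.

Lemma cont_bigU d (l : seq 'I_N) (A : 'I_N -> set V) : 0 <= d ->
  (hausdorff_content s d [set x | exists2 i, i \in l & A i x] <=
   \sum_(i <- l) hausdorff_content s d (A i))%E.
Proof.
move=> d0; elim: l => [|i l IH].
  rewrite big_nil; apply: (le_trans (@cont_mono _ _ s d _ [set 0] _)); last exact: cont_set1.
  by move=> x [].
rewrite big_cons; apply: le_trans (leeD2l _ IH); apply: le_trans (cont_subadd s d _ _).
apply: cont_mono => x [j]; rewrite in_cons => /orP[/eqP -> Ax|jl Ax]; [left|right] => //.
by exists j.
Qed.

Lemma H_gamma_fin : exists2 hr, 0 <= hr & hausdorff_measure s gamma = hr%:E.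
Proof.
have [D D0 HD] := gamma_diam.
have [rm0 rm1 rmi] := rm_prop.
have [g gg] := gamma0.
have rpos : 0 < rm.
  by have /andP[h _] := r01 (Ordinal N0); exact: lt_le_trans h (rmi _).
have dg : (ediam gamma <= D%:E)%E by exact: ediam_le.
have dg0 : (0 <= ediam gamma)%E.
  by apply: (le_trans _ (ediam_ub gg gg)); rewrite lee_fin ed_ge0.
have dgfin : ediam gamma \is a fin_num by rewrite ge0_fin_numE // (le_lt_trans dg) // ltry.
have claim k : forall d, D * rm ^+ k <= d -> (hausdorff_content s d gamma <= (D `^ s)%:E)%E.
  elim: k => [|k IH] d hd.
  - rewrite expr0 mulr1 in hd.
    apply: (le_trans (@cont_cover _ _ s _ _ (fun k => if k is 0%N then gamma else set0) _ _)).
    + by move=> x gx; exists 0%N.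
    + case => [|k]; last by rewrite ediam_set0 leNye.
      by apply: (le_trans dg); rewrite lee_fin.
    + apply: eseries_le => [k|m]; first exact: term_ge0.
      case: m => [|m]; first by rewrite big_geq // lee_fin powR_ge0.
      rewrite big_nat_recl // big1 ?adde0; last by move=> j _; rewrite (term_set0 s0).
      rewrite /term lee_fin; apply: ge0_ler_powR; rewrite ?nnegrE ?fine_ge0 ?(ltW s0) //.
      exact: (fine_le dgfin _ dg).
  - have sub : gamma `<=` [set x | exists2 i, i \in index_enum 'I_N & (S i @` gamma) x].
      case: inv => _ [_ eq] x; rewrite {1}eq => -[i _ hx].
      by exists i => //; rewrite mem_index_enum.
    have d0 : 0 <= d by apply: le_trans hd; rewrite mulr_ge0 // exprn_ge0.
    apply: (le_trans (cont_mono s d sub)); apply: (le_trans (cont_bigU _ _ d0)).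
    apply: (@le_trans _ _ (\sum_(i <- index_enum 'I_N) (rho i)%:E * (D `^ s)%:E)%E).
      apply: lee_sum => i _.
      have /andP[ri0 ri1] := r01 i.
      have -> : d = r i * (d / r i) by rewrite mulrC divfK // gt_eqF.
      apply: (le_trans (cont_lip s0 _ _ _)) => //.
      + by rewrite divr_ge0 // ltW.
      + by move=> x y _ _; rewrite ed_S.
      apply: lee_wpmul2l; first by rewrite lee_fin powR_ge0.
      apply: IH; rewrite ler_pdivlMr //; apply: le_trans hd.
      by rewrite exprSr mulrA ler_wpM2l ?mulr_ge0 ?exprn_ge0 // rmi.
    under eq_bigr do rewrite -EFinM.
    rewrite sumEFin -big_distrl /=.
    have -> : (\sum_(i <- index_enum 'I_N) rho i) = 1 by exact: sum1.
    by rewrite mul1r.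
have Hle : (hausdorff_measure s gamma <= (D `^ s)%:E)%E.
  apply: ge_ereal_sup => _ [d d0 <-].
  have [k hk] := geo_small (q := rm) (ltac:(by rewrite rm0 rm1)) D0 d0.
  by apply: (claim k); rewrite mulrC ltW.
have H0 := H_ge0 s gamma.
exists (fine (hausdorff_measure s gamma)); first exact: fine_ge0.
by rewrite fineK // ge0_fin_numE // (le_lt_trans Hle) // ltry.
Qed.

Local Notation Fh u v := (hausdorff_measure s (phi @` `[u%R, v%R])).

Lemma itvP (u v x : R) : x \in `[u, v]%R <-> u <= x <= v.
Proof. by rewrite in_itv /=. Qed.

Lemma F_scale (i : 'I_N) p q : 0 <= p -> q <= 1 ->
  (Fh (sf i p) (sf i q) <= (rho i)%:E * Fh p q)%E.
Proof.
move=> p0 q1.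
have /andP[ri0 ri1] := r01 i; have rh0 := rho_gt0 i.
apply: le_trans (@H_mono _ _ s _ (S i @` (phi @` `[p, q])) _) _.
  move=> _ [x /itvP /andP[h1 h2] <-].
  set x' := (x - t i) / rho i.
  have ex : sf i x' = x by rewrite sfE /x' mulrC divfK ?gt_eqF //; ring.
  have px : p <= x' by rewrite /x' ler_pdivlMr // lerBrDl mulrC -sfE.
  have xq : x' <= q by rewrite /x' ler_pdivrMr // lerBlDl mulrC -sfE.
  have x01 : 0 <= x' <= 1 by rewrite (le_trans p0 px) (le_trans xq q1).
  exists (phi x'); first by exists x' => //; apply/itvP; rewrite px xq.
  by rewrite -(phi_self i x01) ex.
by apply: H_lip => // x y _ _; rewrite ed_S.
Qed.

Lemma H_split u v w : (Fh u w <= Fh u v + Fh v w)%E.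
Proof.
apply: le_trans (H_mono s _) (H_subadd s _ _).
move=> _ [x /itvP /andP[h1 h2] <-].
case: (leP x v) => xv; [left|right]; exists x => //; apply/itvP.
  by rewrite h1 xv.
by rewrite h2 ltW.
Qed.

Lemma F_sub_gamma u v : 0 <= u -> v <= 1 -> phi @` `[u, v] `<=` gamma.
Proof.
move=> u0 v1 _ [x /itvP /andP[h1 h2] <-]; apply: phi_in_gamma.
by rewrite (le_trans u0 h1) (le_trans h2 v1).
Qed.

Lemma F_point c : (Fh c c <= 0)%E.
Proof.
rewrite -(H_set1 s0 (phi c)); apply: H_mono => // _ [x /itvP /andP[h1 h2] <-].
by rewrite /= (@le_anti _ _ x c); rewrite ?h1 ?h2.
Qed.

Variable hr : R.
Hypothesis hr0 : 0 <= hr.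
Hypothesis hrE : hausdorff_measure s gamma = hr%:E.

Lemma F_le_h u v : 0 <= u -> v <= 1 -> (Fh u v <= hr%:E)%E.
Proof. by move=> u0 v1; rewrite -hrE; apply: H_mono => //; exact: F_sub_gamma. Qed.

Lemma F_middle p q : (p <= q)%N -> (q <= N)%N -> (Fh (t p) (t q) <= (hr * (t q - t p))%:E)%E.
Proof.
elim: q => [|q IH] pq qN.
  by move: pq; rewrite leqn0 => /eqP ->; rewrite subrr mulr0; exact: F_point.
case: (ltngtP p q.+1) pq => // [pq _|-> _]; last by rewrite subrr mulr0; exact: F_point.
have qN' : (q < N)%N by [].
apply: le_trans (H_split _ (t q) _) _.
have h1 := IH pq (ltnW qN').
have h2 : (Fh (t q) (t q.+1) <= (rho (Ordinal qN') * hr)%:E)%E.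
  have e0 : t q = sf (Ordinal qN') 0 by rewrite sfE mulr0 addr0.
  have e1 : t q.+1 = sf (Ordinal qN') 1 by rewrite sfE mulr1 -(tS (Ordinal qN')).
  rewrite {1}e0 e1; apply: le_trans (F_scale _ _ _) _ => //.
  by rewrite EFinM; apply: lee_wpmul2l; [rewrite lee_fin powR_ge0 | exact: F_le_h].
apply: le_trans (leeD h1 h2) _; rewrite -EFinD lee_fin.
have := tS (Ordinal qN'); rewrite /= => ->.
by rewrite mulrBr mulrDr mulrC; lra.
Qed.

Let qm := \big[Order.max/0]_i rho i.
Lemma qm_prop : [/\ 0 <= qm, qm < 1 & forall i, rho i <= qm].
Proof. exact: maxf_prop N0 rho01. Qed.

Lemma rho_hr_q (i : 'I_N) k : rho i * (hr * qm ^+ k) <= hr * qm ^+ k.+1.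
Proof.
have [q0 _ qi] := qm_prop.
apply: (@le_trans _ _ ((hr * qm ^+ k) * qm)).
  by rewrite mulrC ler_wpM2l // mulr_ge0 // exprn_ge0.
by rewrite exprS (mulrC qm) mulrA.
Qed.

Lemma F_right k u : 0 <= u <= 1 -> (Fh u 1 <= (hr * (1 - u) + hr * qm ^+ k)%:E)%E.
Proof.
elim: k u => [|k IH] u u01.
  apply: le_trans (F_le_h _ _) _ => //; first by case/andP: u01.
  by rewrite lee_fin expr0 mulr1 lerDr mulr_ge0 // subr_ge0; case/andP: u01.
have [i hi] := decomp1 u01.
have [u'01 eu] := sf_inv hi.
set u' := (x in sf i x) in eu u'01.
have ti1 : (i.+1 <= N)%N by [].
apply: le_trans (H_split _ (t i.+1) _) _.
have h1 : (Fh u (t i.+1) <= (rho i * (hr * (1 - u') + hr * qm ^+ k))%:E)%E.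
  have e1 : t i.+1 = sf i 1 by rewrite sfE mulr1 -tS.
  rewrite -{1}eu e1; apply: le_trans (F_scale _ _ _) _ => //; first by case/andP: u'01.
  by rewrite EFinM; apply: lee_wpmul2l; [rewrite lee_fin powR_ge0 | exact: IH].
have h2 := F_middle ti1 (leqnn N); rewrite tN in h2.
apply: le_trans (leeD h1 h2) _; rewrite -EFinD lee_fin.
have := rho_hr_q i k; move: eu; rewrite sfE tS => <-.
by lra.
Qed.

Lemma F_left k v : 0 <= v <= 1 -> (Fh 0 v <= (hr * v + hr * qm ^+ k)%:E)%E.
Proof.
elim: k v => [|k IH] v v01.
  apply: le_trans (F_le_h _ _) _ => //; first by case/andP: v01.
  by rewrite lee_fin expr0 mulr1 lerDr mulr_ge0 //; case/andP: v01.
have [j hj] := decomp1 v01.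
have [v'01 ev] := sf_inv hj.
set v' := (x in sf j x) in ev v'01.
apply: le_trans (H_split _ (t j) _) _.
have h1 := F_middle (leq0n j) (ltnW (ltn_ord j)); rewrite t0 subr0 in h1.
rewrite -{1}t0 in h1.
have h2 : (Fh (t j) v <= (rho j * (hr * v' + hr * qm ^+ k))%:E)%E.
  have e0 : t j = sf j 0 by rewrite sfE mulr0 addr0.
  rewrite -ev e0; apply: le_trans (F_scale _ _ _) _ => //; first by case/andP: v'01.
  by rewrite EFinM; apply: lee_wpmul2l; [rewrite lee_fin powR_ge0 | exact: IH].
rewrite -{1}t0; apply: le_trans (leeD h1 h2) _; rewrite -EFinD lee_fin.
have := rho_hr_q j k; move: ev; rewrite sfE => <-.
by lra.
Qed.

Lemma F_gen k u v : 0 <= u -> u <= v -> v <= 1 ->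
  (Fh u v <= (hr * (v - u) + 2 * hr * qm ^+ k)%:E)%E.
Proof.
elim: k u v => [|k IH] u v u0 uv v1.
  apply: le_trans (F_le_h u0 v1) _; rewrite lee_fin expr0 mulr1.
  have h : 0 <= hr * (v - u) by rewrite mulr_ge0 // subr_ge0.
  rewrite -[X in X <= _]add0r; apply: lerD => //.
  by rewrite mulr_natl mulr2n lerDl.
have u01 : 0 <= u <= 1 by rewrite u0 (le_trans uv v1).
have [i hi] := decomp1 u01.
have [u'01 eu] := sf_inv hi.
set u' := (x in sf i x) in eu u'01.
have [q0 q1 qi] := qm_prop.
have hq : 0 <= hr * qm ^+ k by rewrite mulr_ge0 // exprn_ge0.
have rq := rho_hr_q i k.
move: (hi) => /andP[hi1 hi2].
case: (leP v (t i.+1)) => vt.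
  have hv : t i <= v <= t i.+1 by rewrite vt (le_trans hi1 uv).
  have [v'01 ev] := sf_inv hv.
  set v' := (x in sf i x) in ev v'01.
  have u'v' : u' <= v' by rewrite /u' /v' ler_pM2r ?invr_gt0 ?rho_gt0 // lerD2r.
  rewrite -eu -ev; apply: le_trans (F_scale _ _ _) _.
  - by case/andP: u'01.
  - by case/andP: v'01.
  apply: le_trans (lee_wpmul2l _ (IH _ _ _ u'v' _)) _.
  - by rewrite lee_fin powR_ge0.
  - by case/andP: u'01.
  - by case/andP: v'01.
  rewrite -EFinM lee_fin !sfE.
  have -> : t i + rho i * v' - (t i + rho i * u') = rho i * (v' - u') by ring.
  have -> : rho i * (hr * (v' - u') + 2 * hr * qm ^+ k) =
    hr * (rho i * (v' - u')) + 2 * (rho i * (hr * qm ^+ k)) by ring.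
  have -> : 2 * hr * qm ^+ k.+1 = 2 * (hr * qm ^+ k.+1) by ring.
  by lra.
have v01 : 0 <= v <= 1 by rewrite v1 (le_trans u0 uv).
have [j hj] := decomp1 v01.
have [v'01 ev] := sf_inv hj.
set v' := (x in sf j x) in ev v'01.
have rqj := rho_hr_q j k.
have ij : (i.+1 <= j)%N.
  rewrite leqNgt; apply/negP => ji.
  have := lt_le_trans vt (le_trans (andP hj).2 (t_mono ji)).
  by rewrite ltxx.
apply: le_trans (H_split _ (t i.+1) _) _.
apply: le_trans (leeD2l _ (H_split _ (t j) _)) _.
have h1 : (Fh u (t i.+1) <= (rho i * (hr * (1 - u') + hr * qm ^+ k))%:E)%E.
  have e1 : t i.+1 = sf i 1 by rewrite sfE mulr1 -tS.
  rewrite -{1}eu e1; apply: le_trans (F_scale _ _ _) _ => //; first by case/andP: u'01.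
  by rewrite EFinM; apply: lee_wpmul2l; [rewrite lee_fin powR_ge0 | exact: F_right].
have h2 := F_middle ij (ltnW (ltn_ord j)).
have h3 : (Fh (t j) v <= (rho j * (hr * v' + hr * qm ^+ k))%:E)%E.
  have e0 : t j = sf j 0 by rewrite sfE mulr0 addr0.
  rewrite -ev e0; apply: le_trans (F_scale _ _ _) _ => //; first by case/andP: v'01.
  by rewrite EFinM; apply: lee_wpmul2l; [rewrite lee_fin powR_ge0 | exact: F_left].
apply: le_trans (leeD h1 (leeD h2 h3)) _; rewrite -!EFinD lee_fin.
move: eu ev; rewrite !sfE tS => <- <-.
have -> : rho i * (hr * (1 - u') + hr * qm ^+ k) =
  hr * (rho i - rho i * u') + rho i * (hr * qm ^+ k) by ring.
have -> : rho j * (hr * v' + hr * qm ^+ k) =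
  hr * (rho j * v') + rho j * (hr * qm ^+ k) by ring.
have -> : 2 * hr * qm ^+ k.+1 = 2 * (hr * qm ^+ k.+1) by ring.
have -> : hr * (t j + rho j * v' - (t i + rho i * u')) =
  hr * (rho j * v') + hr * (t j) - hr * (t i) - hr * (rho i * u') by ring.
have -> : hr * (t j - (t i + rho i)) = hr * t j - hr * t i - hr * rho i by ring.
have -> : hr * (rho i - rho i * u') = hr * rho i - hr * (rho i * u') by ring.
by lra.
Qed.

Lemma Fh_fin u v : 0 <= u -> v <= 1 -> Fh u v = (fine (Fh u v))%:E.
Proof.
move=> u0 v1; rewrite fineK // ge0_fin_numE ?H_ge0 //.
by apply: le_lt_trans (F_le_h u0 v1) _; rewrite ltry.
Qed.

Lemma F_upper u v : 0 <= u -> u <= v -> v <= 1 -> (Fh u v <= (hr * (v - u))%:E)%E.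
Proof.
move=> u0 uv v1; rewrite (Fh_fin u0 v1) lee_fin -subr_le0.
have [q0 q1 _] := qm_prop.
apply: (@geo_le0 _ qm (2 * hr)); first by rewrite q0 q1.
  by rewrite mulr_ge0.
move=> m; have := F_gen m u0 uv v1; rewrite (Fh_fin u0 v1) lee_fin.
by rewrite -mulrA; lra.
Qed.

Lemma F_exact u v : 0 <= u -> u <= v -> v <= 1 -> Fh u v = (hr * (v - u))%:E.
Proof.
move=> u0 uv v1; apply/le_anti; rewrite F_upper //=.
have v0 : 0 <= v by exact: le_trans u0 uv.
have u1 : u <= 1 by exact: le_trans uv v1.
have h : (hr%:E <= Fh 0 u + (Fh u v + Fh v 1))%E.
  rewrite -hrE; apply: (le_trans (@H_mono _ _ s gamma (phi @` `[0%R, 1%R]) _)).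
    move=> g /gamma_in_phi [x x01 <-]; exists x => //; exact/itvP.
  by apply: le_trans (H_split _ u _) _; apply: leeD2l; exact: H_split.
have h1 := F_upper (lexx 0) u0 u1.
have h2 := F_upper v0 v1 (lexx 1).
move: h; rewrite (Fh_fin u0 v1) => h.
have := le_trans h (leeD h1 (leeD2l _ h2)).
rewrite -!EFinD !lee_fin.
move: (fine _) => c hc; lra.
Qed.

End IFS.

Unset Implicit Arguments.
Unset Strict Implicit.

Theorem corollary5p4 (R : realType) (n N : nat)
    (S : 'I_N -> 'rV[R]_n -> 'rV[R]_n) (r : 'I_N -> R)
    (gamma : set 'rV[R]_n) (a b : 'rV[R]_n) (s : R) (phi : R -> 'rV[R]_n) :
  (2 <= N)%N ->
  (forall i, 0 < r i < 1) ->
  (forall i, similarity (S i) (r i)) ->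
  IFS_invariant S gamma ->
  IFS_quasiarc S gamma a b ->
  0 < s -> \sum_(i < N) (r i) `^ s = 1 ->
  hutchinson_param S r s a b phi ->
  forall u v : R, u \in `[0, 1] -> v \in `[0, 1] -> u <= v ->
    hausdorff_measure s (phi @` `[u, v]) =
      (hausdorff_measure s gamma * (`|u - v|)%:E)%E.
Proof.
move=> N2 r01 Ssim inv _ s0 sum1 hp u v.
rewrite !in_itv /= => /andP[u0 u1] /andP[v0 v1] uv.
have [hr hr0 hrE] := H_gamma_fin N2 r01 Ssim inv s0 sum1.
rewrite (F_exact N2 r01 Ssim inv s0 sum1 hp hr0 hrE u0 uv v1) hrE -EFinM.
by rewrite distrC ger0_norm // subr_ge0.
Qed.
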